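(* Let $k$ be a field, $A_0\subseteq\mathrm{M}_n(k)$ a $d$-dimensional $k$-subalgebra, and $R=k[\epsilon]/(\epsilon^2)$. Let $\mathrm{Def}_{A_0}(R)$ be the set of $R$-subalgebras $A\subseteq\mathrm{M}_n(R)$ such that $A$ and $\mathrm{M}_n(R)/A$ are free $R$-modules, $\mathrm{rank}_R A=d$, and the image of $A$ under reduction $\mathrm{M}_n(R)\to\mathrm{M}_n(k)$ modulo $\epsilon$ is $A_0$ (i.e. $A\otimes_R k=A_0$ inside $\mathrm{M}_n(k)$). Let $G(R)=\{P\in\mathrm{PGL}_n(R)\mid P\equiv [I_n]\bmod \epsilon\}$, acting on $\mathrm{Def}_{A_0}(R)$ by $(A,P)\mapsto P^{-1}AP$. Then there is a bijection $H^1(A_0,\mathrm{M}_n(k)/A_0)\cong \mathrm{Def}_{A_0}(R)/G(R)$.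
   Context: $H^1$ is Hochschild cohomology, with $\mathrm{M}_n(k)/A_0$ an $A_0$-bimodule via matrix multiplication. $\mathrm{PGL}_n(R)=\mathrm{GL}_n(R)/(R^\times I_n)$ for the local ring $R$, and $[I_n]$ is the class of the identity. *)

(* Defs.v *)
From HB Require Import structures.
From mathcomp Require Import all_boot all_order all_algebra.
From mathcomp Require Import ring.
Set Implicit Arguments. Unset Strict Implicit. Unset Printing Implicit Defensive.
Import Order.TTheory GRing.Theory Num.Theory.
Local Open Scope ring_scope.

(* The ring of dual numbers  R = k[eps]/(eps^2),  a + b eps  ~  (a, b) *)
Definition dual (k : Type) : Type := (k * k)%type.

Section Dual.
Variable k : fieldType.

HB.instance Definition _ := GRing.Zmodule.copy (dual k) (k * k)%type.

Definition dual_one : dual k := (1, 0).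
Definition dual_mul (x y : dual k) : dual k :=
  (x.1 * y.1, x.1 * y.2 + x.2 * y.1).

Lemma dual_mulA : associative dual_mul.
Proof. by move=> [a b] [c d] [e f]; rewrite /dual_mul /=; congr pair; ring. Qed.
Lemma dual_mulC : commutative dual_mul.
Proof. by move=> [a b] [c d]; rewrite /dual_mul /=; congr pair; ring. Qed.
Lemma dual_mul1 : left_id dual_one dual_mul.
Proof. by move=> [a b]; rewrite /dual_mul /=; congr pair; ring. Qed.
Lemma dual_mulDl : left_distributive dual_mul +%R.
Proof.
move=> [a b] [c d] [e f].
have -> : ((a, b) + (c, d) : dual k) = (a + c, b + d) by [].
rewrite /dual_mul /=.
have -> : forall x y z w : k, ((x, y) + (z, w) : dual k) = (x + z, y + w) by [].
by congr pair; ring.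
Qed.
Lemma dual_one_neq0 : dual_one != 0.
Proof. by apply/negP => /eqP [] /eqP; rewrite oner_eq0. Qed.

HB.instance Definition _ := GRing.Zmodule_isComNzRing.Build (dual k)
  dual_mulA dual_mulC dual_mul1 dual_mulDl dual_one_neq0.

Definition eps : dual k := (0, 1).
End Dual.

Section Defs.
Variables (k : fieldType) (n : nat).

Definition red (X : 'M[dual k]_n) : 'M[k]_n := map_mx (fun x : dual k => x.1) X.

Definition is_k_subalgebra (A0 : {vspace 'M[k]_n}) : Prop :=
  (1%:M \in A0) /\ (forall a b, a \in A0 -> b \in A0 -> a *m b \in A0).

(* A k-linear map A0 -> M_n(k)/A0 is represented by a lift
   f : M_n(k) -> M_n(k), which is k-linear on A0 modulo A0.          *)
Definition cochain1 (A0 : {vspace 'M[k]_n}) (f : 'M[k]_n -> 'M[k]_n) : Prop :=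
  forall (c : k) a b, a \in A0 -> b \in A0 ->
    f (c *: a + b) - (c *: f a + f b) \in A0.

Definition cocycle1 (A0 : {vspace 'M[k]_n}) (f : 'M[k]_n -> 'M[k]_n) : Prop :=
  cochain1 A0 f /\
  forall a b, a \in A0 -> b \in A0 -> a *m f b - f (a *m b) + f a *m b \in A0.

Definition cohomologous (A0 : {vspace 'M[k]_n}) (f g : 'M[k]_n -> 'M[k]_n) : Prop :=
  exists m : 'M[k]_n, forall a, a \in A0 -> f a - g a - (a *m m - m *m a) \in A0.

Definition is_R_subalgebra (A : 'M[dual k]_n -> Prop) : Prop :=
  [/\ A 0, A 1%:M,
      (forall X Y, A X -> A Y -> A (X + Y)),
      (forall (r : dual k) X, A X -> A (r *: X)) &
      (forall X Y, A X -> A Y -> A (X *m Y))].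

Definition free_of_rank (A : 'M[dual k]_n -> Prop) (d : nat) : Prop :=
  exists b : 'I_d -> 'M[dual k]_n,
    [/\ forall i, A (b i),
        forall X, A X -> exists r : 'I_d -> dual k, X = \sum_(i < d) r i *: b i &
        forall r : 'I_d -> dual k, \sum_(i < d) r i *: b i = 0 -> forall i, r i = 0].

(* M_n(R)/A is a free R-module: the classes of some c_1..c_m form a basis *)
Definition free_quotient (A : 'M[dual k]_n -> Prop) : Prop :=
  exists (m : nat) (c : 'I_m -> 'M[dual k]_n),
    (forall X, exists r : 'I_m -> dual k, A (X - \sum_(i < m) r i *: c i)) /\
    (forall r : 'I_m -> dual k, A (\sum_(i < m) r i *: c i) -> forall i, r i = 0).

Definition DefA0 (A0 : {vspace 'M[k]_n}) (d : nat) (A : 'M[dual k]_n -> Prop) : Prop :=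
  [/\ is_R_subalgebra A, free_of_rank A d, free_quotient A &
      forall Y, Y \in A0 <-> exists X, A X /\ red X = Y].

(* P (a representative in GL_n(R), with inverse Q) defines an element of
   G(R) = { [P] in PGL_n(R) | [P] = [I_n] mod eps }, i.e. P mod eps is a
   nonzero scalar matrix. *)
Definition inG (P Q : 'M[dual k]_n) : Prop :=
  [/\ P *m Q = 1%:M, Q *m P = 1%:M & exists c : k, c != 0 /\ red P = c%:M].

Definition G_conj (A B : 'M[dual k]_n -> Prop) : Prop :=
  exists P Q, inG P Q /\ forall Y, B Y <-> exists X, A X /\ Y = Q *m X *m P.

End Defs.

(* The quotient set  {x | P x} / r,  as the set of its classes. *)
Definition quot_set (T : Type) (P : T -> Prop) (r : T -> T -> Prop) : Type :=
  {S : T -> Prop | exists x, P x /\ S = (fun y => P y /\ r x y)}.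

Definition H1 (k : fieldType) (n : nat) (A0 : {vspace 'M[k]_n}) : Type :=
  quot_set (cocycle1 A0) (cohomologous A0).

Definition DefA0_mod_G (k : fieldType) (n : nat) (A0 : {vspace 'M[k]_n}) (d : nat) : Type :=
  quot_set (@DefA0 k n A0 d) (@G_conj k n).

(* Main.v *)
Require Import Defs.
From HB Require Import structures.
From mathcomp Require Import all_boot all_order all_algebra.
From mathcomp Require Import ring.
From Stdlib Require Import ClassicalEpsilon FunctionalExtensionality PropExtensionality ProofIrrelevance.

Module Helpers.
Set Implicit Arguments. Unset Strict Implicit. Unset Printing Implicit Defensive.
Import GRing.Theory.
Local Open Scope ring_scope.
Section DualMx.
Variables (k : fieldType) (n : nat).
Local Notation M := 'M[k]_n.
Local Notation MR := 'M[dual k]_n.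

Definition epart (X : MR) : M := map_mx (fun x : dual k => x.2) X.
Definition emb (a b : M) : MR := \matrix_(i, j) ((a i j, b i j) : dual k).

Lemma red_emb (a b : M) : red (emb a b) = a.
Proof. by apply/matrixP => i j; rewrite !mxE. Qed.
Lemma epart_emb (a b : M) : epart (emb a b) = b.
Proof. by apply/matrixP => i j; rewrite !mxE. Qed.
Lemma mx_dual_eq (X Y : MR) : red X = red Y -> epart X = epart Y -> X = Y.
Proof.
move=> /matrixP h1 /matrixP h2; apply/matrixP => i j.
move: (h1 i j) (h2 i j); rewrite !mxE; case: (X i j) => ??; case: (Y i j) => ?? /= -> -> //.
Qed.
Lemma red_add (X Y : MR) : red (X + Y) = red X + red Y.
Proof. by apply/matrixP => i j; rewrite !mxE. Qed.
Lemma epart_add (X Y : MR) : epart (X + Y) = epart X + epart Y.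
Proof. by apply/matrixP => i j; rewrite !mxE. Qed.
Lemma red_opp (X : MR) : red (- X) = - red X.
Proof. by apply/matrixP => i j; rewrite !mxE. Qed.
Lemma epart_opp (X : MR) : epart (- X) = - epart X.
Proof. by apply/matrixP => i j; rewrite !mxE. Qed.
Lemma red_sub (X Y : MR) : red (X - Y) = red X - red Y.
Proof. by rewrite red_add red_opp. Qed.
Lemma epart_sub (X Y : MR) : epart (X - Y) = epart X - epart Y.
Proof. by rewrite epart_add epart_opp. Qed.
Lemma red0 : red (0 : MR) = 0.
Proof. by apply/matrixP => i j; rewrite !mxE. Qed.
Lemma epart0 : epart (0 : MR) = 0.
Proof. by apply/matrixP => i j; rewrite !mxE. Qed.
Lemma red_scale (r : dual k) (X : MR) : red (r *: X) = r.1 *: red X.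
Proof. by apply/matrixP => i j; rewrite !mxE. Qed.
Lemma epart_scale (r : dual k) (X : MR) : epart (r *: X) = r.1 *: epart X + r.2 *: red X.
Proof. by apply/matrixP => i j; rewrite !mxE. Qed.
Lemma red1 : red (1%:M : MR) = 1%:M.
Proof. by apply/matrixP => i j; rewrite !mxE; case: (i == j). Qed.
Lemma epart1 : epart (1%:M : MR) = 0.
Proof. by apply/matrixP => i j; rewrite !mxE; case: (i == j). Qed.
Lemma fst_sum I (r : seq I) (P : pred I) (F : I -> dual k) :
  (\sum_(i <- r | P i) F i).1 = \sum_(i <- r | P i) (F i).1.
Proof. by elim/big_rec2: _ => // i y1 y2 _ <-. Qed.
Lemma snd_sum I (r : seq I) (P : pred I) (F : I -> dual k) :
  (\sum_(i <- r | P i) F i).2 = \sum_(i <- r | P i) (F i).2.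
Proof. by elim/big_rec2: _ => // i y1 y2 _ <-. Qed.
Lemma red_mul (X Y : MR) : red (X *m Y) = red X *m red Y.
Proof.
apply/matrixP => i j; rewrite !mxE fst_sum; apply: eq_bigr => l _; rewrite !mxE //.
Qed.
Lemma epart_mul (X Y : MR) : epart (X *m Y) = red X *m epart Y + epart X *m red Y.
Proof.
apply/matrixP => i j; rewrite !mxE snd_sum -big_split /=; apply: eq_bigr => l _; rewrite !mxE //.
Qed.
Lemma red_sum I (r : seq I) (P : pred I) (F : I -> MR) :
  red (\sum_(i <- r | P i) F i) = \sum_(i <- r | P i) red (F i).
Proof. by elim/big_rec2: _ => [|i y1 y2 _ <-]; rewrite ?red0 ?red_add. Qed.
Lemma epart_sum I (r : seq I) (P : pred I) (F : I -> MR) :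
  epart (\sum_(i <- r | P i) F i) = \sum_(i <- r | P i) epart (F i).
Proof. by elim/big_rec2: _ => [|i y1 y2 _ <-]; rewrite ?epart0 ?epart_add. Qed.
End DualMx.
Section Quot.
Variables (T1 T2 : Type) (P1 : T1 -> Prop) (r1 : T1 -> T1 -> Prop)
  (P2 : T2 -> Prop) (r2 : T2 -> T2 -> Prop).

Definition equivon (T : Type) (P : T -> Prop) (r : T -> T -> Prop) :=
  [/\ forall x, P x -> r x x,
      forall x y, P x -> P y -> r x y -> r y x &
      forall x y z, P x -> P y -> P z -> r x y -> r y z -> r x z].

Lemma cls_eq (T : Type) (P : T -> Prop) (r : T -> T -> Prop) x y :
  equivon P r -> P x -> P y -> r x y ->
  (fun z => P z /\ r x z) = (fun z => P z /\ r y z).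
Proof.
move=> [rf sy tr] Px Py rxy; apply: functional_extensionality => z.
apply: propositional_extensionality; split=> -[Pz h]; split=> //.
  by apply: (tr y x z) => //; apply sy.
by apply: (tr x y z).
Qed.

Lemma cls_rel (T : Type) (P : T -> Prop) (r : T -> T -> Prop) x y :
  equivon P r -> P x -> P y ->
  (fun z => P z /\ r x z) = (fun z => P z /\ r y z) -> r x y.
Proof.
move=> [rf _ _] Px Py /(f_equal (fun S => S y)) E.
have : P y /\ r y y by split=> //; apply: rf.
by rewrite -E => -[].
Qed.

Lemma sig_eqP (A : Type) (Q : A -> Prop) (u v : sig Q) :
  proj1_sig u = proj1_sig v -> u = v.
Proof.
case: u => x p; case: v => y q /= E; subst.
by rewrite (proof_irrelevance _ p q).
Qed.

Lemma quot_bij (phi : T1 -> T2) :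
  equivon P1 r1 -> equivon P2 r2 ->
  (forall x, P1 x -> P2 (phi x)) ->
  (forall x y, P1 x -> P1 y -> (r1 x y <-> r2 (phi x) (phi y))) ->
  (forall y, P2 y -> exists x, P1 x /\ r2 (phi x) y) ->
  exists f : quot_set P1 r1 -> quot_set P2 r2, bijective f.
Proof.
move=> e1 e2 h1 h2 h3.
pose rep (s : quot_set P1 r1) := proj1_sig (constructive_indefinite_description _ (proj2_sig s)).
have repP s : P1 (rep s) /\ proj1_sig s = (fun y => P1 y /\ r1 (rep s) y).
  by rewrite /rep; case: constructive_indefinite_description.
pose F (s : quot_set P1 r1) : quot_set P2 r2 :=
  exist _ (fun y => P2 y /\ r2 (phi (rep s)) y)
    (ex_intro _ (phi (rep s)) (conj (h1 _ (proj1 (repP s))) erefl)).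
have Finj : injective F.
  move=> s s' /(f_equal (@proj1_sig _ _)) /=.
  move: (repP s) (repP s') => [Px Ex] [Px' Ex'] E.
  have := cls_rel e2 (h1 _ Px) (h1 _ Px') E.
  move/(h2 _ _ Px Px') => r; have := cls_eq e1 Px Px' r.
  by rewrite -Ex -Ex' => E2; apply: sig_eqP.
have Fsurj : forall t, exists s, F s = t.
  move=> [S HS]; have [y [Py ES]] := HS.
  have [x [Px rxy]] := h3 _ Py.
  exists (exist _ (fun z => P1 z /\ r1 x z) (ex_intro _ x (conj Px erefl))).
  set s := exist _ _ _.
  move: (repP s) => [Px' /= Ex'].
  have rxx' := cls_rel e1 Px Px' Ex'.
  have r2xx' : r2 (phi x) (phi (rep s)) by apply/h2.
  have : (fun z => P2 z /\ r2 (phi (rep s)) z) = (fun z => P2 z /\ r2 y z).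
    apply: cls_eq => //; first by apply h1.
    case: e2 => _ sy tr; apply: (tr _ (phi x)) => //; try by apply h1.
    by apply sy => //; apply h1.
  by move=> E; apply: sig_eqP; rewrite /= E ES.
pose G t := proj1_sig (constructive_indefinite_description _ (Fsurj t)).
have GK t : F (G t) = t by rewrite /G; case: constructive_indefinite_description.
exists F; exists G => // s; apply: Finj; exact: GK.
Qed.
End Quot.
Ltac mxring := rewrite ?mulmxDr ?mulmxDl ?mulmxN ?mulNmx ?mulmxBr ?mulmxBl -?scalemxAl -?scalemxAr ?mulmx0 ?mul0mx ?mulmx1 ?mul1mx;
  let i := fresh "i" in let j := fresh "j" in apply/matrixP => i j; rewrite !mxE; ring.

Section Main.
Variables (k : fieldType) (n : nat) (A0 : {vspace 'M[k]_n}) (hA0 : is_k_subalgebra A0).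
Local Notation M := 'M[k]_n.
Local Notation MR := 'M[dual k]_n.

Lemma A0mul (a b : M) : a \in A0 -> b \in A0 -> a *m b \in A0.
Proof. exact: hA0.2. Qed.

Definition Af (f : M -> M) (X : MR) : Prop :=
  red X \in A0 /\ epart X - f (red X) \in A0.

Lemma eqA0 (x y : M) : x = y -> y \in A0 -> x \in A0.
Proof. by move=> ->. Qed.

Section Coc.
Variables (f : M -> M) (hf : cocycle1 A0 f).
Lemma coc0 : f 0 \in A0.
Proof.
have H := hf.1 1 0 0 (mem0v _) (mem0v _); rewrite -memvN; apply: eqA0 H.
rewrite scaler0 addr0 scale1r; mxring.
Qed.
Lemma coc1 : f 1%:M \in A0.
Proof.
have := hf.2 _ _ hA0.1 hA0.1; apply: eqA0; rewrite !mul1mx !mulmx1; mxring.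
Qed.
Lemma coc_scale c a : a \in A0 -> f (c *: a) - c *: f a \in A0.
Proof.
move=> ha; have := memvD (hf.1 c a 0 ha (mem0v _)) coc0; apply: eqA0.
rewrite addr0; mxring.
Qed.
Lemma coc_add a b : a \in A0 -> b \in A0 -> f (a + b) - (f a + f b) \in A0.
Proof. by move=> ha hb; have := hf.1 1 a b ha hb; rewrite !scale1r. Qed.
Lemma coc_mul a b : a \in A0 -> b \in A0 -> a *m f b - f (a *m b) + f a *m b \in A0.
Proof. exact: hf.2. Qed.
Lemma coc_sum m (al : 'I_m -> k) (v : 'I_m -> M) : (forall i, v i \in A0) ->
  f (\sum_i al i *: v i) - \sum_i al i *: f (v i) \in A0.
Proof.
move=> hv.
suff : (\sum_i al i *: v i) \in A0 /\ f (\sum_i al i *: v i) - \sum_i al i *: f (v i) \in A0 by case.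
elim/big_rec2: _ => [|i y1 y2 _ [h1 h2]]; first by rewrite subr0; split; [exact: mem0v| exact: coc0].
split; first by apply: memvD => //; apply: memvZ.
have := memvD (hf.1 (al i) (v i) y2 (hv i) h1) h2; apply: eqA0; mxring.
Qed.
End Coc.

Lemma coh_equiv : equivon (cocycle1 A0) (cohomologous A0).
Proof.
split.
- move=> f _; exists 0 => a _; apply: (eqA0 _ (mem0v _)); mxring.
- move=> f g _ _ [m h]; exists (- m) => a ha; rewrite -memvN; apply: eqA0 (h a ha); mxring.
- move=> f g h _ _ _ [m1 h1] [m2 h2]; exists (m1 + m2) => a ha.
  apply: eqA0 (memvD (h1 a ha) (h2 a ha)); mxring.
Qed.

Lemma vb_mem (U : {vspace M}) (i : 'I_(\dim U)) : (vbasis U)`_i \in U.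
Proof. by apply: vbasis_mem; apply: mem_nth; rewrite size_tuple. Qed.

Lemma vb_free (U : {vspace M}) (al : 'I_(\dim U) -> k) :
  \sum_i al i *: (vbasis U)`_i = 0 -> forall i, al i = 0.
Proof. by move: al; apply/freeP; apply: (basis_free (vbasisP U)). Qed.

Lemma inter0 (x : M) : x \in A0 -> x \in (A0^C)%VS -> x = 0.
Proof.
move=> h1 h2; have : x \in (A0 :&: A0^C)%VS by rewrite memv_cap h1 h2.
by rewrite capv_compl memv0 => /eqP.
Qed.

Lemma decomp (x : M) : exists a, exists al : 'I_(\dim (A0^C)%VS) -> k,
  a \in A0 /\ x = a + \sum_i al i *: (vbasis (A0^C)%VS)`_i.
Proof.
have : x \in (A0 + A0^C)%VS by rewrite addv_complf memvf.
case/memv_addP => u hu [v hv ->]; exists u; exists (fun i => coord (vbasis (A0^C)%VS) i v).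
by split=> //; rewrite {1}(coord_vbasis hv).
Qed.

Lemma red_sum_emb m (r : 'I_m -> dual k) (a b : 'I_m -> M) :
  red (\sum_i r i *: emb (a i) (b i)) = \sum_i (r i).1 *: a i.
Proof. by rewrite red_sum; apply: eq_bigr => i _; rewrite red_scale red_emb. Qed.
Lemma epart_sum_emb m (r : 'I_m -> dual k) (a b : 'I_m -> M) :
  epart (\sum_i r i *: emb (a i) (b i)) = \sum_i ((r i).1 *: b i + (r i).2 *: a i).
Proof. by rewrite epart_sum; apply: eq_bigr => i _; rewrite epart_scale red_emb epart_emb. Qed.

Lemma dual_eta (r : dual k) : r = (r.1, r.2). Proof. by case: r. Qed.

Lemma Af_Def f : cocycle1 A0 f -> DefA0 A0 (\dim A0) (Af f).
Proof.
move=> hf; split.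
- split.
  + by rewrite /Af red0 epart0 sub0r memvN; split; [exact: mem0v | exact: coc0].
  + by rewrite /Af red1 epart1 sub0r memvN; split; [exact: hA0.1 | exact: coc1].
  + move=> X Y [h1 h2] [h3 h4]; rewrite /Af red_add epart_add; split; first exact: memvD.
    have := memvB (memvD h2 h4) (coc_add hf h1 h3); apply: eqA0; mxring.
  + move=> r X [h1 h2]; rewrite /Af red_scale epart_scale; split; first exact: memvZ.
    have := memvB (memvD (memvZ r.1 h2) (memvZ r.2 h1)) (coc_scale hf r.1 h1); apply: eqA0; mxring.
  + move=> X Y [h1 h2] [h3 h4]; rewrite /Af red_mul epart_mul; split; first exact: A0mul.
    have := memvD (memvD (A0mul h1 h4) (A0mul h2 h3)) (coc_mul hf h1 h3); apply: eqA0; mxring.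
- pose v := vbasis A0.
  exists (fun i => emb v`_i (f v`_i)); split.
  + move=> i; rewrite /Af red_emb epart_emb subrr; split; [exact: vb_mem | exact: mem0v].
  + move=> X [h1 h2].
    pose al := fun i => coord v i (red X).
    pose w := epart X - \sum_i al i *: f v`_i.
    have hw : w \in A0.
      have := memvD h2 (coc_sum hf al (fun i => vb_mem i)); rewrite -(coord_vbasis h1).
      apply: eqA0; rewrite /w; mxring.
    exists (fun i => (al i, coord v i w)); apply: mx_dual_eq.
      rewrite red_sum; under eq_bigr do rewrite red_scale red_emb; by rewrite -(coord_vbasis h1).
    rewrite epart_sum; under eq_bigr do rewrite epart_scale red_emb epart_emb.
    rewrite big_split /= -(coord_vbasis hw) /w; mxring.
  + move=> r hr i.
    have h1 : forall i, (r i).1 = 0.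
      apply: vb_free; move: (f_equal (@red _ _) hr); rewrite red_sum red0 => E; rewrite -[X in _ = X]E.
      by apply: eq_bigr => j _; rewrite red_scale red_emb.
    have h2 : forall i, (r i).2 = 0.
      apply: vb_free; move: (f_equal (@epart _ _) hr); rewrite epart_sum epart0 => E; rewrite -[X in _ = X]E.
      by apply: eq_bigr => j _; rewrite epart_scale red_emb epart_emb h1 scale0r add0r.
    by rewrite (dual_eta (r i)) h1 h2.
- pose w := vbasis (A0^C)%VS.
  exists (\dim (A0^C)%VS); exists (fun i => emb w`_i 0); split.
  + move=> X.
    have [a0 [al [ha0 Ea]]] := decomp (red X).
    have [a1 [be [ha1 Eb]]] := decomp (epart X - f a0).
    exists (fun i => (al i, be i)); rewrite /Af red_sub epart_sub red_sum_emb epart_sum_emb /=.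
    have -> : \sum_i (al i *: (0:M) + be i *: w`_i) = \sum_i be i *: w`_i by apply: eq_bigr => i _; rewrite scaler0 add0r.
    have -> : red X - \sum_i al i *: w`_i = a0 by rewrite Ea; mxring.
    split=> //; apply: eqA0 ha1; move: Eb; rewrite -/w => Eb.
    have -> : a1 = epart X - f a0 - \sum_i be i *: w`_i by rewrite Eb; mxring.
    mxring.
  + move=> r [h1 h2].
    move: h1 h2; rewrite red_sum_emb epart_sum_emb.
    move=> h1; under eq_bigr do rewrite scaler0 add0r.
    move=> h2.
    have hC : forall al : 'I_(\dim (A0^C)%VS) -> k, \sum_i al i *: w`_i \in (A0^C)%VS.
      by move=> al; apply: memv_suml => i _; apply: memvZ; apply: vb_mem.
    have e1 : forall i, (r i).1 = 0 by apply: vb_free; apply: inter0 h1 (hC _).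
    move: h2; have -> : \sum_i (r i).1 *: w`_i = 0 by apply: big1 => i _; rewrite e1 scale0r.
    move=> h2.
    have e2 : forall i, (r i).2 = 0.
      apply: vb_free; apply: inter0 (hC _).
      by have := memvD h2 (coc0 hf); apply: eqA0; mxring.
    by move=> i; rewrite (dual_eta (r i)) e1 e2.
- move=> Y; split.
  + by move=> hY; exists (emb Y (f Y)); rewrite /Af red_emb epart_emb subrr; split=> //; split=> //; exact: mem0v.
  + by case=> X [[h1 _] <-].
Qed.

Lemma inG_red (P Q : MR) : inG P Q ->
  exists c : k, [/\ c != 0, red P = c%:M & red Q = c^-1%:M].
Proof.
case=> hPQ _ [c [hc hP]]; exists c; split=> //.
have : red (P *m Q) = 1%:M by rewrite hPQ red1.
rewrite red_mul hP mul_scalar_mx => /(f_equal (fun x => c^-1 *: x)).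
by rewrite scalerA mulVf // scale1r scalemx1.
Qed.

Lemma Gconj_equiv : equivon (fun _ : MR -> Prop => True) (@G_conj k n).
Proof.
split.
- move=> A _; exists 1%:M, 1%:M; split.
    split; rewrite ?mulmx1 //; exists 1; split; [exact: oner_neq0| exact: red1].
  by move=> Y; split; [move=> hY; exists Y; rewrite mulmx1 mul1mx | case=> X [hX ->]; rewrite mulmx1 mul1mx].
- move=> A B _ _ [P [Q [hG hB]]].
  have [c [hc hP hQ]] := inG_red hG.
  case: hG => hPQ hQP _.
  exists Q, P; split.
    split=> //; exists c^-1; split=> //; exact: invr_neq0.
  move=> X; split.
    move=> hX; exists (Q *m X *m P); split; first by apply/hB; exists X.
    by rewrite !mulmxA hPQ mul1mx -mulmxA hPQ mulmx1.
  case=> Y [/hB [X0 [hX ->]] ->].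
  by rewrite !mulmxA hPQ mul1mx -mulmxA hPQ mulmx1.
- move=> A B C _ _ _ [P1 [Q1 [hG1 hB]]] [P2 [Q2 [hG2 hC]]].
  have [c1 [hc1 hP1 _]] := inG_red hG1.
  have [c2 [hc2 hP2 _]] := inG_red hG2.
  case: hG1 => h1 h1' _; case: hG2 => h2 h2' _.
  exists (P1 *m P2), (Q2 *m Q1); split.
    split.
    + by rewrite -mulmxA (mulmxA P2) h2 mul1mx.
    + by rewrite -mulmxA (mulmxA Q1) h1' mul1mx.
    + exists (c1 * c2); split; first exact: mulf_neq0.
      by rewrite red_mul hP1 hP2 scalar_mxM.
  move=> Y; split.
    case/hC => Z [/hB [X [hX ->]] ->]; exists X; split=> //.
    by rewrite !mulmxA.
  case=> X [hX ->]; apply/hC; exists (Q1 *m X *m P1); split; first by apply/hB; exists X.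
  by rewrite !mulmxA.
Qed.

Lemma conjE (m : M) (X : MR) :
  red (emb 1%:M (- m) *m X *m emb 1%:M m) = red X /\
  epart (emb 1%:M (- m) *m X *m emb 1%:M m) = epart X + (red X *m m - m *m red X).
Proof.
rewrite !red_mul !epart_mul !red_mul !red_emb !epart_emb; split; first by rewrite mul1mx mulmx1.
mxring.
Qed.

Lemma conj_inG (m : M) : inG (emb 1%:M m) (emb 1%:M (- m)).
Proof.
split.
- by apply: mx_dual_eq; rewrite ?red_mul ?epart_mul ?red_emb ?epart_emb ?red1 ?epart1 ?mulmx1 //; mxring.
- by apply: mx_dual_eq; rewrite ?red_mul ?epart_mul ?red_emb ?epart_emb ?red1 ?epart1 ?mulmx1 //; mxring.
- by exists 1; split; [exact: oner_neq0 | rewrite red_emb].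
Qed.

End Main.

Section Main2.
Variables (k : fieldType) (n : nat) (A0 : {vspace 'M[k]_n}) (hA0 : is_k_subalgebra A0).
Local Notation M := 'M[k]_n.
Local Notation MR := 'M[dual k]_n.

Lemma coh_to_G (f g : M -> M) : cohomologous A0 f g -> G_conj (Af A0 f) (Af A0 g).
Proof.
case=> m hm.
have hG : inG (emb 1%:M (- m)) (emb 1%:M m) by have := conj_inG (- m); rewrite opprK.
exists (emb 1%:M (- m)), (emb 1%:M m); split=> // Y; split.
- case=> ha hy; exists (emb 1%:M (- m) *m Y *m emb 1%:M m).
  have [e1 e2] := conjE m Y.
  split; last first.
    case: hG => h1 h2 _.
    by rewrite !mulmxA h2 mul1mx -mulmxA h2 mulmx1.
  rewrite /Af e1 e2; split=> //.
  apply: eqA0 (memvB hy (hm _ ha)); mxring.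
- case=> X [[ha hx] ->]; have [e1 e2] := conjE (- m) X; rewrite opprK in e1 e2.
  rewrite /Af e1 e2; split=> //.
  apply: eqA0 (memvD hx (hm _ ha)); mxring.
Qed.

Lemma G_to_coh (f g : M -> M) : G_conj (Af A0 f) (Af A0 g) -> cohomologous A0 f g.
Proof.
case=> P [Q [hG hB]].
have [c [hc hP hQ]] := inG_red hG.
case: hG => hPQ _ _.
set N := epart P; set N' := epart Q.
have hN : c *: N' = - (c^-1 *: N).
  have : epart (P *m Q) = 0 by rewrite hPQ epart1.
  rewrite epart_mul hP hQ -/N -/N' mul_scalar_mx mul_mx_scalar => /eqP.
  by rewrite addr_eq0 => /eqP.
exists (- (c^-1 *: N)) => a ha.
have hX : Af A0 f (emb a (f a)) by rewrite /Af red_emb epart_emb subrr; split=> //; exact: mem0v.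
have [_ hY] : Af A0 g (Q *m emb a (f a) *m P) by apply/hB; exists (emb a (f a)).
have Er : red (Q *m emb a (f a) *m P) = a.
  rewrite !red_mul hP hQ red_emb mul_mx_scalar mul_scalar_mx. by rewrite scalerA mulfV // scale1r.
have Ee : epart (Q *m emb a (f a) *m P) = c^-1 *: (a *m N) + f a + (c *: N') *m a.
  rewrite !epart_mul !red_mul hP hQ red_emb epart_emb -/N -/N' !mul_mx_scalar !mul_scalar_mx.
  rewrite scalerDr scalerA mulfV // scale1r -scalemxAl -scalemxAl; by rewrite addrA.
move: hY; rewrite Er Ee hN => hY; apply: eqA0 hY; mxring.
Qed.

Section Surj.
Variables (d : nat) (A : MR -> Prop) (hA : DefA0 A0 d A).

Lemma A_sub X Y : A X -> A Y -> A (X - Y).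
Proof.
case: hA => [[_ _ hadd hsc _] _ _ _] hX hY.
by rewrite -scaleN1r; apply: hadd => //; apply: hsc.
Qed.

Lemma A_red X : A X -> red X \in A0.
Proof. by case: hA => _ _ _ h hX; apply/h; exists X. Qed.

Lemma kerA (Z : MR) : red Z = 0 -> (A Z <-> epart Z \in A0).
Proof.
move=> hZ; case: (hA) => [[_ _ hadd hsc _] _ [m [c [hsp hind]]] hred]; split.
- move=> hAZ.
  have [r hr] := hsp (emb (epart Z) 0).
  have E : ((0, 1) : dual k) *: emb (epart Z) 0 = Z.
    by apply: mx_dual_eq; rewrite ?red_scale ?epart_scale ?red_emb ?epart_emb ?hZ /= ?scale0r ?scale1r ?add0r.
  have h1 : A (\sum_i (((0, 1) : dual k) * r i) *: c i).
    have := A_sub hAZ (hsc ((0, 1) : dual k) _ hr).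
    by rewrite scalerBr E scaler_sumr opprB addrC subrK; under eq_bigr do rewrite scalerA.
  have h2 : forall i, (r i).1 = 0.
    by move=> i; have := hind _ h1 i => /(f_equal snd) /=; rewrite mul0r mul1r add0r.
  have := A_red hr; rewrite red_sub red_emb red_sum.
  by under eq_bigr do rewrite red_scale h2 scale0r; rewrite big1 // subr0.
- move=> hE; have [X [hX hXr]] := (hred _).1 hE.
  have -> : Z = ((0, 1) : dual k) *: X.
    by apply: mx_dual_eq; rewrite ?red_scale ?epart_scale ?hZ ?hXr /= ?scale0r ?scale1r ?add0r.
  exact: hsc.
Qed.

Definition liftA (a : M) : MR := epsilon (inhabits 0) (fun X => A X /\ red X = a).
Lemma liftAP a : a \in A0 -> A (liftA a) /\ red (liftA a) = a.
Proof.
move=> ha; rewrite /liftA; apply: (epsilon_spec (inhabits (0 : MR)) (fun X => A X /\ red X = a)).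
by case: hA => _ _ _ h; apply/h.
Qed.
Definition fA (a : M) : M := epart (liftA a).

Lemma A_Af Y : A Y <-> Af A0 fA Y.
Proof.
case: (hA) => [[_ _ hadd hsc _] _ _ _]; split.
- move=> hY; have ha := A_red hY; have [hL hLr] := liftAP ha.
  split=> //; rewrite /fA.
  have := (kerA (Z := Y - liftA (red Y)) _).1 (A_sub hY hL).
  by rewrite epart_sub; apply; rewrite red_sub hLr subrr.
- case=> ha hy; have [hL hLr] := liftAP ha.
  have hZ : A (Y - liftA (red Y)).
    by apply/kerA; rewrite ?red_sub ?epart_sub ?hLr ?subrr.
  by have := hadd _ _ hL hZ; rewrite addrC subrK.
Qed.

Lemma fA_cocycle : cocycle1 A0 fA.
Proof.
case: (hA) => [[_ _ hadd hsc hmul] _ _ _]; split.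
- move=> c a b ha hb; have [hLa hLar] := liftAP ha; have [hLb hLbr] := liftAP hb.
  have := hadd _ _ (hsc ((c, 0) : dual k) _ hLa) hLb.
  case/A_Af => _; rewrite red_add red_scale epart_add epart_scale hLar hLbr /= scale0r addr0.
  rewrite -memvN; apply: eqA0; rewrite /fA; mxring.
- move=> a b ha hb; have [hLa hLar] := liftAP ha; have [hLb hLbr] := liftAP hb.
  have := hmul _ _ hLa hLb.
  case/A_Af => _; rewrite red_mul epart_mul hLar hLbr.
  apply: eqA0; rewrite /fA; mxring.
Qed.
End Surj.

Lemma surjA d (A : MR -> Prop) : DefA0 A0 d A ->
  exists f, cocycle1 A0 f /\ G_conj (Af A0 f) A.
Proof.
move=> hA; exists (fA A); split; first exact: (fA_cocycle hA).
exists 1%:M, 1%:M; split.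
  split; rewrite ?mulmx1 //; exists 1; split; [exact: oner_neq0| exact: red1].
move=> Y; split.
  by move=> hY; exists Y; rewrite mulmx1 mul1mx; split=> //; apply/(A_Af hA).
by case=> X [hX ->]; rewrite mulmx1 mul1mx; apply/(A_Af hA).
Qed.
End Main2.
End Helpers.
Import Helpers.

Theorem proposition3p8 (k : fieldType) (n d : nat) (A0 : {vspace 'M[k]_n})
  (hA0 : is_k_subalgebra A0) (hdim : \dim A0 = d) :
  exists f : H1 A0 -> DefA0_mod_G A0 d, bijective f.
Proof.
subst d; apply: (Helpers.quot_bij (phi := Helpers.Af A0)).
- exact: coh_equiv.
- have [h1 h2 h3] := Gconj_equiv k n; split.
  + by move=> x _; apply: h1.
  + by move=> x y _ _; apply: h2.
  + by move=> x y z _ _ _; apply: h3.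
- by move=> f hf; apply: Af_Def.
- move=> f g hf hg; split; [exact: coh_to_G | exact: G_to_coh].
- by move=> A hA; have [f [hf hG]] := surjA hA; exists f.
Qed.
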